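(* Let $T\in\mathbb{Z}_{>0}$, $\mathcal T=\{0,\dots,T\}$, $\mathcal T_{a:b}=\mathcal T\cap\{a,\dots,b\}$, and let $\boldsymbol\xi=(\xi_0,\dots,\xi_T)$ be a stochastic process with finite support. Let $L\ge 1$, $\alpha\in(0,1)$ and $\Delta:=(\alpha^{1/2}-\alpha)/L$. Then: (a) If a deterministic square matrix $\Phi$ is $(L,\alpha)$-stable and $\|\Phi-\Phi_t(\boldsymbol\xi_{0:t})\|\le\Delta$ a.s. for all $t\in\mathcal T_{1:T}$, then $\{\Phi_t(\boldsymbol\xi_{0:t})\}_{t\in\mathcal T_{1:T}}$ is $(L,\alpha^{1/2})$-stable. (b) If the deterministic pair $(A,B)$ is $(L,\alpha)$-stabilizable, $\|A-A(\xi_t)\|\le\Delta/2$ and $\|B-B(\xi_t)\|\le\Delta/(2L)$ a.s. for $t\in\mathcal T_{1:T}$, then $(\{A(\xi_t)\}_{t\in\mathcal T_{1:T}},\{B(\xi_t)\}_{t\in\mathcal T_{1:T}})$ is $(L,\alpha^{1/2})$-stabilizable. (c) If the deterministic pair $(A,C)$ is $(L,\alpha)$-detectable, $\|A-A(\xi_t)\|\le\Delta/2$ a.s. for $t\in\mathcal T_{1:T}$ and $\|C-C(\xi_t)\|\le\Delta/(2L)$ a.s. for $t\in\mathcal T_{0:T-1}$, then $(\{A(\xi_t)\}_{t\in\mathcal T_{1:T}},\{C(\xi_t)\}_{t\in\mathcal T_{0:T-1}})$ is $(L,\alpha^{1/2})$-detectable.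
   Context: $\|\cdot\|$ is the Euclidean norm / induced 2-norm. $\boldsymbol\xi_{a:b}=(\xi_a,\dots,\xi_b)$. $A(\cdot),B(\cdot),C(\cdot)$ are matrix-valued functions of $\xi_t$; $\Phi_t(\cdot)$ is a square-matrix-valued function of $\boldsymbol\xi_{0:t}$. Deterministic notions (for $L>0,\alpha\in(0,1)$): a square matrix $\Phi$ is $(L,\alpha)$-stable if $\|\Phi^t\|\le L\alpha^t$ for all integers $t\ge0$; $(A,B)$ is $(L,\alpha)$-stabilizable if there is $K$ with $\|K\|\le L$ such that $A-BK$ is $(L,\alpha)$-stable; $(A,C)$ is $(L,\alpha)$-detectable if there is $K$ with $\|K\|\le L$ such that $A-KC$ is $(L,\alpha)$-stable. Stochastic notions: $\{\Phi_t(\boldsymbol\xi_{0:t})\}_{t\in\mathcal T_{1:T}}$ is $(L,\alpha)$-stable if $\|\Phi_{t''}(\boldsymbol\xi_{0:t''})\cdots\Phi_{t'+1}(\boldsymbol\xi_{0:t'+1})\|\le L\alpha^{t''-t'}$ a.s. for all $t'<t''$ in $\mathcal T$. $(\{A(\xi_t)\}_{t\in\mathcal T_{1:T}},\{B(\xi_t)\}_{t\in\mathcal T_{1:T}})$ is $(L,\alpha)$-stabilizable if there exist matrices $K_t(\boldsymbol\xi_{0:t})$, $t\in\mathcal T_{0:T-1}$ (functions of $\boldsymbol\xi_{0:t}$ only), with $\|K_t\|\le L$ a.s., such that $\{A(\xi_t)-B(\xi_t)K_{t-1}(\boldsymbol\xi_{0:t-1})\}_{t\in\mathcal T_{1:T}}$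 is $(L,\alpha)$-stable. $(\{A(\xi_t)\}_{t\in\mathcal T_{1:T}},\{C(\xi_t)\}_{t\in\mathcal T_{0:T-1}})$ is $(L,\alpha)$-detectable if there exist $K_t(\boldsymbol\xi_{0:t})$, $t\in\mathcal T_{1:T}$, with $\|K_t\|\le L$ a.s., such that $\{A(\xi_t)-K_t(\boldsymbol\xi_{0:t})C(\xi_{t-1})\}_{t\in\mathcal T_{1:T}}$ is $(L,\alpha)$-stable. *)

(* Defs.v *)
From HB Require Import structures.
From mathcomp Require Import all_boot all_order all_algebra.
From mathcomp Require Import boolp classical_sets reals.
Set Implicit Arguments. Unset Strict Implicit. Unset Printing Implicit Defensive.
Import Order.TTheory GRing.Theory Num.Theory.
Local Open Scope ring_scope.
Local Open Scope classical_set_scope.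

Definition vnorm (R : realType) (n : nat) (v : 'cV[R]_n) : R :=
  Num.sqrt (\sum_(i < n) v i 0 ^+ 2).

Definition opnorm (R : realType) (m n : nat) (A : 'M[R]_(m, n)) : R :=
  sup [set vnorm (A *m x) | x in [set x : 'cV[R]_n | vnorm x <= 1]].

Definition mpow (R : realType) (n : nat) (Phi : 'M[R]_n) (k : nat) : 'M[R]_n :=
  iter k (mulmx Phi) 1%:M.

Definition det_stable (R : realType) (n : nat) (L alpha : R) (Phi : 'M[R]_n) : Prop :=
  forall t : nat, opnorm (mpow Phi t) <= L * alpha ^+ t.

Definition det_stabilizable (R : realType) (n m : nat) (L alpha : R)
  (A : 'M[R]_n) (B : 'M[R]_(n, m)) : Prop :=
  exists K : 'M[R]_(m, n), opnorm K <= L /\ det_stable L alpha (A - B *m K).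

Definition det_detectable (R : realType) (n p : nat) (L alpha : R)
  (A : 'M[R]_n) (C : 'M[R]_(p, n)) : Prop :=
  exists K : 'M[R]_(n, p), opnorm K <= L /\ det_stable L alpha (A - K *m C).

(* The process xi = (xi_0,...,xi_T) with finite support is realized on a finite
   sample space Omega with probability weights P; "almost surely" means
   "for every outcome of positive probability". *)
Definition almost_surely (R : realType) (Omega : finType) (P : Omega -> R)
  (Q : Omega -> Prop) : Prop :=
  forall w : Omega, 0 < P w -> Q w.

Definition hist (X : Type) (w : nat -> X) (t : nat) : seq X :=
  [seq w i | i <- iota 0 t.+1].

(* mprod F a k = F (a+k) * ... * F (a+1)  (identity when k = 0) *)
Fixpoint mprod (R : realType) (n : nat) (F : nat -> 'M[R]_n) (a k : nat) : 'M[R]_n :=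
  match k with
  | 0 => 1%:M
  | k'.+1 => F (a + k)%N *m mprod F a k'
  end.

(* {G_t}_{t in T_{1:T}} is (L,alpha)-stable, G w t being the realized matrix
   at time t on outcome w:  ||G_{t''} ... G_{t'+1}|| <= L alpha^(t''-t') a.s.
   for all 0 <= t' < t'' <= T. *)
Definition sto_stable (R : realType) (T : nat) (Omega : finType) (P : Omega -> R)
  (n : nat) (G : Omega -> nat -> 'M[R]_n) (L alpha : R) : Prop :=
  forall t' t'' : nat, (t' < t'' <= T)%N ->
    almost_surely P (fun w =>
      opnorm (mprod (G w) t' (t'' - t')) <= L * alpha ^+ (t'' - t')).

Definition sto_stabilizable (R : realType) (T : nat) (X : Type) (Omega : finType)
  (P : Omega -> R) (xi : Omega -> nat -> X) (n m : nat) (L alpha : R)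
  (A : X -> 'M[R]_n) (B : X -> 'M[R]_(n, m)) : Prop :=
  exists K : nat -> seq X -> 'M[R]_(m, n),
    (forall t : nat, (t < T)%N ->
       almost_surely P (fun w => opnorm (K t (hist (xi w) t)) <= L)) /\
    sto_stable T P
      (fun w t => A (xi w t) - B (xi w t) *m K t.-1 (hist (xi w) t.-1)) L alpha.

Definition sto_detectable (R : realType) (T : nat) (X : Type) (Omega : finType)
  (P : Omega -> R) (xi : Omega -> nat -> X) (n p : nat) (L alpha : R)
  (A : X -> 'M[R]_n) (C : X -> 'M[R]_(p, n)) : Prop :=
  exists K : nat -> seq X -> 'M[R]_(n, p),
    (forall t : nat, (1 <= t <= T)%N ->
       almost_surely P (fun w => opnorm (K t (hist (xi w) t)) <= L)) /\
    sto_stable T P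
      (fun w t => A (xi w t) - K t (hist (xi w) t) *m C (xi w t.-1)) L alpha.

(* Main.v *)
Require Import Defs.
From HB Require Import structures.
From mathcomp Require Import all_boot all_order all_algebra.
From mathcomp Require Import boolp classical_sets reals.
From mathcomp Require Import ring lra.
Set Implicit Arguments. Unset Strict Implicit. Unset Printing Implicit Defensive.
Import Order.TTheory GRing.Theory Num.Theory.
Local Open Scope ring_scope.
Local Open Scope classical_set_scope.

Section VN.
Variable R : realType.

Lemma CS n (a b : 'I_n -> R) :
  (\sum_i a i * b i) ^+ 2 <= (\sum_i a i ^+ 2) * (\sum_i b i ^+ 2).
Proof.
have H0 : 0 <= \sum_i \sum_j (a i * b j - a j * b i) ^+ 2.
  by apply: sumr_ge0 => i _; apply: sumr_ge0 => j _; exact: sqr_ge0.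
have E : \sum_i \sum_j (a i * b j - a j * b i) ^+ 2 =
  (\sum_i a i ^+ 2) * (\sum_j b j ^+ 2) + (\sum_i b i ^+ 2) * (\sum_j a j ^+ 2)
  - 2 * ((\sum_i a i * b i) * (\sum_j a j * b j)).
  rewrite !big_distrlr /= mulr_sumr.
  under [X in _ = _ - X]eq_bigr do rewrite mulr_sumr.
  rewrite -big_split -sumrB /=.
  apply: eq_bigr => i _; rewrite -big_split -sumrB /=.
  by apply: eq_bigr => j _; ring.
move: H0; rewrite E.
set A := \sum_i a i ^+ 2; set B := \sum_i b i ^+ 2; set C := \sum_i a i * b i.
rewrite (mulrC B A) expr2; lra.
Qed.

Lemma vnorm_ge0 n (v : 'cV[R]_n) : 0 <= vnorm v.
Proof. exact: sqrtr_ge0. Qed.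

Lemma vnorm_sq n (v : 'cV[R]_n) : vnorm v ^+ 2 = \sum_i v i 0 ^+ 2.
Proof. by rewrite sqr_sqrtr // sumr_ge0 // => i _; exact: sqr_ge0. Qed.

Lemma vnormD n (u v : 'cV[R]_n) : vnorm (u + v) <= vnorm u + vnorm v.
Proof.
rewrite -(ler_pXn2r (n:=2)) // ?nnegrE ?addr_ge0 ?vnorm_ge0 //.
rewrite vnorm_sq sqrrD !vnorm_sq.
have -> : \sum_i (u + v) i 0 ^+ 2 = \sum_i u i 0 ^+ 2 + \sum_i v i 0 ^+ 2
   + 2 * \sum_i u i 0 * v i 0.
  rewrite mulr_sumr -!big_split /=; apply: eq_bigr => i _; rewrite !mxE; ring.
have : \sum_i u i 0 * v i 0 <= vnorm u * vnorm v.
  apply: le_trans (ler_norm _) _.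
  rewrite -(@ler_pXn2r _ 2) // ?nnegrE ?normr_ge0 ?mulr_ge0 ?vnorm_ge0 //.
  by rewrite real_normK ?num_real // exprMn !vnorm_sq; exact: CS.
move=> h; lra.
Qed.

Lemma vnorm0 n : vnorm (0 : 'cV[R]_n) = 0.
Proof. by rewrite /vnorm big1 ?sqrtr0 // => i _; rewrite mxE expr0n. Qed.

Lemma vnormZ n c (v : 'cV[R]_n) : vnorm (c *: v) = `|c| * vnorm v.
Proof.
rewrite /vnorm; under eq_bigr do rewrite mxE exprMn.
by rewrite -mulr_sumr sqrtrM ?sqr_ge0 // sqrtr_sqr.
Qed.

Lemma vnormN n (v : 'cV[R]_n) : vnorm (- v) = vnorm v.
Proof. by rewrite -scaleN1r vnormZ normrN1 mul1r. Qed.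

Lemma vnorm_eq0 n (v : 'cV[R]_n) : vnorm v = 0 -> v = 0.
Proof.
move=> h; have : \sum_i v i 0 ^+ 2 = 0 by rewrite -vnorm_sq h expr0n.
move/psumr_eq0P => H; apply/matrixP => i j; rewrite ord1 mxE.
by apply/eqP; rewrite -sqrf_eq0; apply/eqP; apply: H => // k _; exact: sqr_ge0.
Qed.

Lemma coord_le n (v : 'cV[R]_n) i : `|v i 0| <= vnorm v.
Proof.
rewrite -sqrtr_sqr; apply: ler_wsqrtr; rewrite (bigD1 i) //= lerDl.
by apply: sumr_ge0 => k _; exact: sqr_ge0.
Qed.

Lemma opnorm_bnd m n (A : 'M[R]_(m, n)) : exists c, forall x : 'cV[R]_n,
  vnorm x <= 1 -> vnorm (A *m x) <= c.
Proof.
exists (Num.sqrt (\sum_i (\sum_j `|A i j|) ^+ 2)) => x hx.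
apply: ler_wsqrtr; apply: ler_sum => i _; rewrite mxE.
rewrite -real_normK ?num_real //.
rewrite ler_pXn2r ?nnegrE ?normr_ge0 //; last by apply: sumr_ge0 => j _; exact: normr_ge0.
apply: le_trans (ler_norm_sum _ _ _) _; apply: ler_sum => j _.
rewrite normrM; apply: ler_piMr => //; apply: le_trans (coord_le _ _) hx.
Qed.

Lemma opnorm_ub m n (A : 'M[R]_(m, n)) x : vnorm x <= 1 -> vnorm (A *m x) <= opnorm A.
Proof.
move=> hx; have [c hc] := opnorm_bnd A.
apply: ub_le_sup; last by exists x.
by exists c => y [z hz <-]; exact: hc.
Qed.

Lemma opnorm_le m n (A : 'M[R]_(m, n)) c :
  (forall x, vnorm x <= 1 -> vnorm (A *m x) <= c) -> opnorm A <= c.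
Proof.
move=> H; apply: ge_sup; first by exists (vnorm (A *m 0)), 0 => //=; rewrite vnorm0.
by move=> y [z hz <-]; exact: H.
Qed.

Lemma opnorm_ge0 m n (A : 'M[R]_(m, n)) : 0 <= opnorm A.
Proof.
by apply: le_trans (opnorm_ub A (x := 0) _); rewrite ?mulmx0 vnorm0.
Qed.

Lemma opnorm_vec m n (A : 'M[R]_(m, n)) x : vnorm (A *m x) <= opnorm A * vnorm x.
Proof.
have [/eqP h0|hn] := boolP (vnorm x == 0).
  by rewrite (vnorm_eq0 h0) mulmx0 !vnorm0 mulr0.
have hp : 0 < vnorm x by rewrite lt_def hn vnorm_ge0.
have Ex : x = vnorm x *: ((vnorm x)^-1 *: x) by rewrite scalerA divff // scale1r.
rewrite {1}Ex -scalemxAr vnormZ ger0_norm ?vnorm_ge0 // mulrC.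
rewrite ler_pM2r //; apply: opnorm_ub.
by rewrite vnormZ ger0_norm ?invr_ge0 ?vnorm_ge0 // mulVf.
Qed.

Lemma opnormM m n p (A : 'M[R]_(m, n)) (B : 'M[R]_(n, p)) :
  opnorm (A *m B) <= opnorm A * opnorm B.
Proof.
apply: opnorm_le => x hx; rewrite -mulmxA; apply: le_trans (opnorm_vec _ _) _.
apply: ler_wpM2l; first exact: opnorm_ge0.
apply: le_trans (opnorm_vec _ _) _; apply: ler_piMr => //; exact: opnorm_ge0.
Qed.

Lemma opnormD m n (A B : 'M[R]_(m, n)) : opnorm (A + B) <= opnorm A + opnorm B.
Proof.
apply: opnorm_le => x hx; rewrite mulmxDl; apply: le_trans (vnormD _ _) _.
by apply: lerD; exact: opnorm_ub.
Qed.

Lemma opnormN m n (A : 'M[R]_(m, n)) : opnorm (- A) <= opnorm A.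
Proof. by apply: opnorm_le => x hx; rewrite mulNmx vnormN; exact: opnorm_ub. Qed.

Lemma opnormB m n (A B : 'M[R]_(m, n)) : opnorm (A - B) <= opnorm (B - A).
Proof. by rewrite -opprB; exact: opnormN. Qed.

Lemma mpowS n (Phi : 'M[R]_n) k : mpow Phi k *m Phi = mpow Phi k.+1.
Proof.
elim: k => [|k IH]; first by rewrite /= mul1mx mulmx1.
by rewrite /= -mulmxA IH.
Qed.

Lemma key n (Phi : 'M[R]_n) (F : nat -> 'M[R]_n) a L alpha Delta :
  det_stable L alpha Phi ->
  forall k, (forall i, (0 < i <= k)%N -> opnorm (Phi - F (a + i)%N) <= Delta) ->
  forall m, opnorm (mpow Phi m *m mprod F a k) <= L * alpha ^+ m * (alpha + L * Delta) ^+ k.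
Proof.
move=> hst; elim=> [|k IH] hD m.
  by rewrite /= mulmx1 expr0 mulr1; exact: hst.
have IH' := IH (fun i hi => hD i (ltac:(case/andP: hi => h1 h2; apply/andP; split => //; exact: leqW))).
have hDk : opnorm (Phi - F (a + k.+1)%N) <= Delta by apply: hD; rewrite ltnSn.
set D := Phi - F (a + k.+1)%N.
have EF : F (a + k.+1)%N = Phi - D by rewrite /D opprB addrC subrK.
rewrite /= EF.
have -> : mpow Phi m *m ((Phi - D) *m mprod F a k)
  = mpow Phi m.+1 *m mprod F a k - mpow Phi m *m D *m mprod F a k.
  by rewrite mulmxA mulmxBr mpowS mulmxBl.
apply: le_trans (opnormD _ _) _; apply: le_trans (lerD (lexx _) (opnormN _)) _.
have h1 := IH' m.+1.
have h2 : opnorm (mpow Phi m *m D *m mprod F a k) <= (L * alpha ^+ m) * Delta * (L * (alpha + L * Delta) ^+ k).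
  apply: le_trans (opnormM _ _) _; apply: ler_pM; rewrite ?opnorm_ge0 //.
    apply: le_trans (opnormM _ _) _; apply: ler_pM; rewrite ?opnorm_ge0 //.
  by have := IH' 0%N; rewrite /= mul1mx expr0 mulr1.
apply: le_trans (lerD h1 h2) _; rewrite le_eqVlt; apply/orP; left; apply/eqP.
rewrite !exprS; ring.
Qed.

Lemma partA (T : nat) (Omega : finType) (P : Omega -> R) n (Phi : 'M[R]_n)
  (G : Omega -> nat -> 'M[R]_n) L alpha :
  1 <= L -> 0 < alpha ->
  det_stable L alpha Phi ->
  (forall t : nat, (1 <= t <= T)%N ->
        almost_surely P (fun w => opnorm (Phi - G w t) <= (Num.sqrt alpha - alpha) / L)) ->
  sto_stable T P G L (Num.sqrt alpha).
Proof.
move=> hL ha hst hD t' t'' /andP [h1 h2] w hw.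
have := key (F := G w) (a := t') (Delta := (Num.sqrt alpha - alpha) / L) hst (k := (t'' - t')%N) _ 0.
rewrite /= mul1mx expr0 mulr1.
have -> : alpha + L * ((Num.sqrt alpha - alpha) / L) = Num.sqrt alpha.
  have hL0 : L != 0 by apply/eqP => h; rewrite h in hL; lra.
  by field.
apply => i /andP [hi1 hi2]; apply: hD => //; apply/andP; split.
  by rewrite addn_gt0 hi1 orbT.
by apply: leq_trans h2; rewrite -(subnKC (ltnW h1)) leq_add2l.
Qed.
End VN.

Theorem proposition1 (R : realType) (T : nat) (hT : (0 < T)%N)
  (X : Type) (Omega : finType) (P : Omega -> R)
  (hP0 : forall w, 0 <= P w) (hP1 : \sum_(w : Omega) P w = 1)
  (xi : Omega -> nat -> X) (L alpha : R)
  (hL : 1 <= L) (ha0 : 0 < alpha) (ha1 : alpha < 1) :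
  let Delta := (Num.sqrt alpha - alpha) / L in
  (* (a) *)
  (forall (n : nat) (Phi : 'M[R]_n) (Phis : nat -> seq X -> 'M[R]_n),
     det_stable L alpha Phi ->
     (forall t : nat, (1 <= t <= T)%N ->
        almost_surely P (fun w => opnorm (Phi - Phis t (hist (xi w) t)) <= Delta)) ->
     sto_stable T P (fun w t => Phis t (hist (xi w) t)) L (Num.sqrt alpha)) /\
  (* (b) *)
  (forall (n m : nat) (A : 'M[R]_n) (B : 'M[R]_(n, m))
          (Af : X -> 'M[R]_n) (Bf : X -> 'M[R]_(n, m)),
     det_stabilizable L alpha A B ->
     (forall t : nat, (1 <= t <= T)%N ->
        almost_surely P (fun w => opnorm (A - Af (xi w t)) <= Delta / 2)) ->
     (forall t : nat, (1 <= t <= T)%N ->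
        almost_surely P (fun w => opnorm (B - Bf (xi w t)) <= Delta / (2 * L))) ->
     sto_stabilizable T P xi L (Num.sqrt alpha) Af Bf) /\
  (* (c) *)
  (forall (n p : nat) (A : 'M[R]_n) (C : 'M[R]_(p, n))
          (Af : X -> 'M[R]_n) (Cf : X -> 'M[R]_(p, n)),
     det_detectable L alpha A C ->
     (forall t : nat, (1 <= t <= T)%N ->
        almost_surely P (fun w => opnorm (A - Af (xi w t)) <= Delta / 2)) ->
     (forall t : nat, (t < T)%N ->
        almost_surely P (fun w => opnorm (C - Cf (xi w t)) <= Delta / (2 * L))) ->
     sto_detectable T P xi L (Num.sqrt alpha) Af Cf).
Proof.
move=> Delta.
have hL0 : L != 0 by apply/eqP => h; rewrite h in hL; lra.
have hL0' : 0 < L by lra.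
split; [|split].
- move=> n Phi Phis hst hD.
  exact: (partA (G := fun w t => Phis t (hist (xi w) t)) hL ha0 hst hD).
- move=> n m A B Af Bf [K [hK hst]] hA hB; exists (fun _ _ => K); split.
    by move=> t _ w _.
  apply: (partA (Phi := A - B *m K) hL ha0 hst) => t ht w hw.
  have -> : A - B *m K - (Af (xi w t) - Bf (xi w t) *m K)
      = (A - Af (xi w t)) - (B - Bf (xi w t)) *m K.
    by rewrite mulmxBl !opprD !opprK addrACA.
  apply: le_trans (opnormD _ _) _; apply: le_trans (lerD (lexx _) (opnormN _)) _.
  apply: le_trans (lerD (hA t ht w hw) (opnormM _ _)) _.
  have : opnorm (B - Bf (xi w t)) * opnorm K <= Delta / (2 * L) * L.
    by apply: ler_pM; rewrite ?opnorm_ge0 //; exact: hB.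
  have -> : Delta / (2 * L) * L = Delta / 2 by field.
  rewrite -/Delta; move=> h; lra.
- move=> n p A C Af Cf [K [hK hst]] hA hC; exists (fun _ _ => K); split.
    by move=> t _ w _.
  apply: (partA (Phi := A - K *m C) hL ha0 hst) => t ht w hw.
  have -> : A - K *m C - (Af (xi w t) - K *m Cf (xi w t.-1))
      = (A - Af (xi w t)) - K *m (C - Cf (xi w t.-1)).
    by rewrite mulmxBr !opprD !opprK addrACA.
  apply: le_trans (opnormD _ _) _; apply: le_trans (lerD (lexx _) (opnormN _)) _.
  apply: le_trans (lerD (hA t ht w hw) (opnormM _ _)) _.
  have : opnorm K * opnorm (C - Cf (xi w t.-1)) <= L * (Delta / (2 * L)).
    apply: ler_pM; rewrite ?opnorm_ge0 //; apply: hC => //.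
    by case/andP: ht => h1 h2; rewrite prednK.
  have -> : L * (Delta / (2 * L)) = Delta / 2 by field.
  rewrite -/Delta; move=> h; lra.
Qed.
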